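(* Let $G$ be a mixed abelian group with torsion subgroup $T$. Let $A$ be a direct summand of $G$ containing a subgroup $N$ as an essential subgroup. Suppose $G = H \oplus K$ is a decomposition with $N \subseteq H$, and let $\pi: G \to H$ be the standard projection along $K$. Then the restriction of $\pi$ to $A$ is injective, and $\pi(A)$ is a direct summand of $G$ and also a direct summand of $H$.
   Context: All groups are additively written abelian groups; a mixed group is one containing both non-zero elements of finite order and elements of infinite order. A subgroup $N$ of a group $A$ is essential in $A$ if $N \cap S \neq \{0\}$ for every non-zero subgroup $S$ of $A$. *)

(* Defs.v *)
From mathcomp Require Import all_boot all_algebra.
Set Implicit Arguments. Unset Strict Implicit. Unset Printing Implicit Defensive.
Import GRing.Theory.
Local Open Scope ring_scope.

Definition subgroup (G : zmodType) (S : G -> Prop) : Prop :=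
  S 0 /\ (forall x y, S x -> S y -> S (x - y)).

Definition subset_of (G : zmodType) (S M : G -> Prop) : Prop :=
  forall x, S x -> M x.

Definition direct_summand_in (G : zmodType) (S M : G -> Prop) : Prop :=
  subgroup S /\ subset_of S M /\
  exists B : G -> Prop, subgroup B /\ subset_of B M /\
    (forall x, S x -> B x -> x = 0) /\
    (forall m, M m -> exists s b, S s /\ B b /\ m = s + b).

Definition whole (G : zmodType) : G -> Prop := fun _ => True.

Definition direct_summand (G : zmodType) (S : G -> Prop) : Prop :=
  direct_summand_in S (@whole G).

Definition direct_decomposition (G : zmodType) (H K : G -> Prop) : Prop :=
  subgroup H /\ subgroup K /\ (forall x, H x -> K x -> x = 0) /\
  (forall g, exists h k, H h /\ K k /\ g = h + k).

Definition essential_in (G : zmodType) (N A : G -> Prop) : Prop :=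
  subgroup N /\ subset_of N A /\
  forall S : G -> Prop, subgroup S -> subset_of S A ->
    (exists x, S x /\ x <> 0) -> exists x, S x /\ N x /\ x <> 0.

Definition finite_order (G : zmodType) (x : G) : Prop :=
  exists n : nat, (0 < n)%N /\ x *+ n = 0.

Definition torsion_subgroup (G : zmodType) : G -> Prop := @finite_order G.

Definition mixed_group (G : zmodType) : Prop :=
  (exists x : G, x <> 0 /\ finite_order x) /\ (exists y : G, ~ finite_order y).

Definition img_set (G : zmodType) (f : G -> G) (A : G -> Prop) : G -> Prop :=
  fun y => exists a, A a /\ y = f a.

(* Main.v *)
Require Import Defs.
From mathcomp Require Import all_boot all_algebra.
From Stdlib Require Import Classical ClassicalEpsilon.
Import GRing.Theory.
Local Open Scope ring_scope.

Section Aux.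
Set Implicit Arguments.
Context {G : zmodType}.
Implicit Types S T A N : G -> Prop.

Lemma sg0 S : subgroup S -> S 0.
Proof. by case. Qed.
Lemma sgB S x y : subgroup S -> S x -> S y -> S (x - y).
Proof. by case=> _ h; apply: h. Qed.
Lemma sgN S x : subgroup S -> S x -> S (- x).
Proof. by move=> hS hx; rewrite -sub0r; apply: sgB => //; apply: sg0. Qed.
Lemma sgD S x y : subgroup S -> S x -> S y -> S (x + y).
Proof. by move=> hS hx hy; rewrite -[y]opprK; apply: sgB => //; apply: sgN. Qed.
Lemma sgMn S x n : subgroup S -> S x -> S (x *+ n).
Proof. move=> hS hx; elim: n => [|n IH]; first by rewrite mulr0n; apply: sg0.
by rewrite mulrS; apply: sgD. Qed.

Lemma idt (x y a b c : G) : a - (b - c) = ((x - b) - (y - c)) - ((x - y) - a).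
Proof. rewrite !opprB !addrA [_ - y + a]addrAC addrNK -!addrA (addrC a) [c + (_ + _)]addrCA [- b + (_ + _)]addrCA [c - x]addrC [- b + (_ + _)]addrCA [a + (_ + _)]addrCA addNKr. by rewrite [RHS]addrC [- b + c]addrC. Qed.

Lemma idt2 (x y a b : G) : (x - y) - (a - b) = (x - a) - (y - b).
Proof. rewrite !opprB !addrA. by rewrite [RHS]addrAC [LHS]addrAC [x - y - a]addrAC. Qed.

Lemma idt3 (g p a b : G) : g - p = (g - (a - b)) + ((a - p) - b).
Proof. rewrite opprB addrA addrAC -!addrA; congr (_ + _). by rewrite addrCA addNKr addKr. Qed.

Lemma proj_add S T (f : G -> G) : subgroup S -> subgroup T ->
  (forall x, S x -> T x -> x = 0) -> (forall g, S (f g) /\ T (g - f g)) ->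
  forall x y, f (x - y) = f x - f y.
Proof.
move=> hS hT hST hf x y; apply/eqP; rewrite -subr_eq0; apply/eqP; apply: hST.
  apply: sgB => //; first by case: (hf (x - y)).
  by apply: sgB => //; [case: (hf x)|case: (hf y)].
rewrite (idt x y).
apply: sgB => //; last by case: (hf (x - y)).
by apply: sgB => //; [case: (hf x)|case: (hf y)].
Qed.

Lemma add_0 {f : G -> G} : (forall x y, f (x - y) = f x - f y) -> f 0 = 0.
Proof. by move=> h; have := h 0 0; rewrite !subrr. Qed.
Lemma add_N {f : G -> G} : (forall x y, f (x - y) = f x - f y) -> forall x, f (- x) = - f x.
Proof. by move=> h x; rewrite -sub0r h add_0 // sub0r. Qed.
Lemma add_D {f : G -> G} : (forall x y, f (x - y) = f x - f y) -> forall x y, f (x + y) = f x + f y.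
Proof. by move=> h x y; have := h x (- y); rewrite opprK => ->; rewrite (add_N h) opprK. Qed.
Lemma add_Mn {f : G -> G} : (forall x y, f (x - y) = f x - f y) -> forall x n, f (x *+ n) = f x *+ n.
Proof. move=> h x; elim=> [|n IH]; first by rewrite !mulr0n add_0.
by rewrite !mulrS add_D // IH. Qed.

Lemma proj_id S T (f : G -> G) : subgroup S -> subgroup T ->
  (forall x, S x -> T x -> x = 0) -> (forall g, S (f g) /\ T (g - f g)) ->
  forall x, S x -> f x = x.
Proof.
move=> hS hT hST hf x hx; apply/eqP; rewrite eq_sym -subr_eq0; apply/eqP.
case: (hf x) => h1 h2; apply: hST => //; exact: sgB.
Qed.

Lemma prime_in_N A N y p : subgroup A -> essential_in N A -> A y -> prime p ->
  y *+ p = 0 -> N y.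
Proof.
move=> hA [hN [hNA hE]] hy pp hyp.
case: (classic (y = 0)) => [->|yn0]; first exact: sg0.
have p0 : (0 < p)%N by apply: prime_gt0.
pose S := fun z => exists k : nat, z = y *+ k.
have hS : subgroup S.
  split; first by exists 0%N; rewrite mulr0n.
  move=> _ _ [i ->] [j ->]; exists (i + (p.-1 * j))%N.
  apply/eqP; rewrite subr_eq mulrnDr -addrA -mulrnDr.
  have -> : (p.-1 * j + j = p * j)%N.
    have e : p = p.-1.+1 by rewrite prednK.
    by rewrite [in RHS]e mulSn addnC.
  by rewrite mulrnA hyp mul0rn addr0.
have [z [[a ->] [hNz zn0]]] : exists x, S x /\ N x /\ x <> 0.
  apply: hE => //; first by move=> _ [k ->]; apply: sgMn.
  by exists y; split => //; exists 1%N.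
have npa : ~~ (p %| a)%N.
  apply/negP=> /dvdnP [q aq]; apply: zn0; by rewrite aq mulnC mulrnA hyp mul0rn.
have cop : coprime p a by rewrite prime_coprime.
case: (Bezoutl a p0) => u _; rewrite (eqP cop) => /dvdnP [q hq].
have -> : y = - ((y *+ a) *+ u).
  apply/eqP; rewrite -addr_eq0 -mulrnA -{1}[y]mulr1n -mulrnDr [(a * u)%N]mulnC hq.
  by rewrite mulnC mulrnA hyp mul0rn.
by apply: sgN => //; apply: sgMn.
Qed.

Lemma torsion_inv A N (bt : G -> G) : subgroup A -> essential_in N A ->
  (forall x y, bt (x - y) = bt x - bt y) -> (forall x, A (bt x)) ->
  (forall n, N n -> bt n = 0) ->
  forall n x, (0 < n)%N -> A x -> x *+ n = 0 -> exists t, A t /\ t - bt t = x.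
Proof.
move=> hA hE hb hbA hbN; elim/ltn_ind => n IH x n0 hx hxn.
case: (ltngtP n 1) => [|n1|n1].
- by rewrite ltnS leqn0 => /eqP n00; rewrite n00 in n0.
- set p := pdiv n; have pp : prime p by apply: pdiv_prime.
  set m := (n %/ p)%N.
  have nm : n = (m * p)%N by rewrite divnK // pdiv_dvd.
  have m0 : (0 < m)%N by rewrite divn_gt0 ?pdiv_gt0 // pdiv_leq // ltnW.
  have mn : (m < n)%N by apply: ltn_Pdiv => //; apply: prime_gt1.
  have hy : N (x *+ m).
    apply: (@prime_in_N A N (x *+ m) p hA hE (@sgMn A x m hA hx) pp).
    by rewrite -mulrnA -nm.
  have hbm : bt x *+ m = 0 by rewrite -add_Mn // hbN.
  have [t' [ht' et']] := IH m mn (bt x) m0 (hbA x) hbm.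
  exists (x + t'); split; first exact: sgD.
  by rewrite add_D // opprD addrACA et' subrK.
- by move: hxn; rewrite n1 mulr1n => ->; exists 0; split; [apply: sg0|rewrite add_0 // subrr].
Qed.

Lemma bt_torsion A N (bt : G -> G) : subgroup A -> essential_in N A ->
  (forall x y, bt (x - y) = bt x - bt y) ->
  (forall n, N n -> bt n = 0) ->
  forall x, A x -> exists n, (0 < n)%N /\ bt x *+ n = 0.
Proof.
move=> hA [hN [hNA hE]] hb hbN x hx.
case: (classic (x = 0)) => [->|xn0]; first by exists 1%N; rewrite add_0.
pose S := fun z => exists i j : nat, z = x *+ i - x *+ j.
have hS : subgroup S.
  split; first by exists 0%N, 0%N; rewrite subrr.
  move=> _ _ [i [j ->]] [i' [j' ->]]; exists (i + j')%N, (j + i')%N.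
  rewrite !mulrnDr opprB; rewrite addrA -[x *+ i - _ + _]addrA [- _ + _]addrC addrA.
  by rewrite opprD addrA.
have [z [[i [j ->]] [hNz zn0]]] : exists z, S z /\ N z /\ z <> 0.
  apply: hE => //; first by move=> _ [i [j ->]]; exact: (@sgB A _ _ hA (@sgMn A x i hA hx) (@sgMn A x j hA hx)).
  by exists x; split => //; exists 1%N, 0%N; rewrite mulr0n subr0.
have := hbN _ hNz; rewrite hb (add_Mn hb x i) (add_Mn hb x j); move/eqP; rewrite subr_eq0; move/eqP => e.
case: (ltngtP i j) => [ij|ij|ij].
- exists (j - i)%N; split; first by rewrite subn_gt0.
  by rewrite mulrnBr; [rewrite e subrr|exact: ltnW].
- exists (i - j)%N; split; first by rewrite subn_gt0.
  by rewrite mulrnBr; [rewrite e subrr|exact: ltnW].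
- by exfalso; apply: zn0; rewrite ij subrr.
Qed.

End Aux.

Theorem lemma2p4 (G : zmodType) (A N H K : G -> Prop) (pi : G -> G) :
  mixed_group G ->
  direct_summand A ->
  essential_in N A ->
  direct_decomposition H K ->
  subset_of N H ->
  (forall g, H (pi g) /\ K (g - pi g)) ->
  (forall a b, A a -> A b -> pi a = pi b -> a = b) /\
  direct_summand (img_set pi A) /\
  direct_summand_in (img_set pi A) H.
Proof.
move=> _ [hA [_ [B [hB [_ [hAB hABs]]]]]] hE [hH [hK [hHK hHKs]]] hNH hpi.
have hE' := hE; case: hE' => [hN [hNA hEs]].
have piD := proj_add pi hH hK hHK hpi.
have piH := proj_id pi hH hK hHK hpi.
have pAex : forall g, {a | A a /\ B (g - a)}.
  move=> g; apply: constructive_indefinite_description.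
  have [s [b [hs [hb e]]]] := hABs g I.
  by exists s; split => //; rewrite e addrC addKr.
pose pA g := proj1_sig (pAex g).
have hpA : forall g, A (pA g) /\ B (g - pA g) by move=> g; exact: proj2_sig (pAex g).
have pAD := proj_add pA hA hB hAB hpA.
pose bt g := pA (g - pi g).
have btD : forall x y, bt (x - y) = bt x - bt y.
  by move=> x y; rewrite /bt -pAD piD idt2.
have btA : forall x, A (bt x) by move=> x; case: (hpA (x - pi x)).
have btN : forall n, N n -> bt n = 0.
  by move=> n hn; rewrite /bt piH ?subrr ?(add_0 pAD) //; apply: hNH.
have surj : forall a', A a' -> exists a, A a /\ a - bt a = a'.
  move=> a' ha'.
  have [n [n0 hn]] := bt_torsion bt hA hE btD btN a' ha'.
  have [t [ht et]] := torsion_inv bt hA hE btD btA btN n (bt a') n0 (btA a') hn.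
  exists (a' + t); split; first exact: sgD.
  by rewrite (add_D btD) opprD addrACA et subrK.
have capB : forall a, A a -> B (pi a) -> pi a = 0.
  move=> a ha hb; apply: NNPP => pn0.
  pose S := fun z => A z /\ B (pi z).
  have hS : subgroup S.
    split; first by split; [apply: sg0|rewrite (add_0 piD); apply: sg0].
    by move=> x y [hx1 hx2] [hy1 hy2]; split; [apply: sgB|rewrite piD; apply: sgB].
  have [z [[hz1 hz2] [hzN zn0]]] : exists z, S z /\ N z /\ z <> 0.
    apply: hEs => //; first by move=> z [].
    by exists a; split => //; move=> a0; apply: pn0; rewrite a0 (add_0 piD).
  by apply: zn0; apply: hAB => //; rewrite -(piH z (hNH z hzN)).
have decomp : forall g, exists a, A a /\ B (g - pi a).
  move=> g; have [hg1 hg2] := hpA g.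
  have [a [ha ea]] := surj _ hg1.
  exists a; split => //.
  have -> : g - pi a = (g - pA g) + ((a - pi a) - bt a).
    by rewrite -ea; apply: idt3.
  apply: sgD => //; by case: (hpA (a - pi a)).
have simg : subgroup (img_set pi A).
  split; first by exists 0; split; [apply: sg0|rewrite (add_0 piD)].
  by move=> _ _ [a [ha ->]] [b [hb ->]]; exists (a - b); split; [apply: sgB|rewrite piD].
have capB' : forall x, img_set pi A x -> B x -> x = 0.
  by move=> _ [a [ha ->]] hb; apply: capB.
split.
  move=> a b ha hb e; apply/eqP; rewrite -subr_eq0; apply/eqP.
  apply: NNPP => dn0.
  pose S := fun z => A z /\ K z.
  have hS : subgroup S.
    by split; [split; apply: sg0|move=> x y [? ?] [? ?]; split; apply: sgB].
  have [z [[hz1 hz2] [hzN zn0]]] : exists z, S z /\ N z /\ z <> 0.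
    apply: hEs => //; first by move=> z [].
    exists (a - b); split => //; split; first exact: sgB.
    by have := (hpi (a - b)).2; rewrite piD e subrr subr0.
  by apply: zn0; apply: hHK => //; apply: hNH.
split.
  split => //; split => //; exists B; split => //; split => //; split => //.
  move=> g _; have [a [ha hb]] := decomp g.
  by exists (pi a), (g - pi a); split; [exists a|split => //; rewrite addrC subrK].
split => //; split; first by move=> _ [a [ha ->]]; case: (hpi a).
exists (fun x => B x /\ H x); split.
  by split; [split; apply: sg0|move=> x y [? ?] [? ?]; split; apply: sgB].
split; first by move=> x [].
split; first by move=> x hx [hb _]; apply: capB'.
move=> h hh; have [a [ha hb]] := decomp h.
exists (pi a), (h - pi a); split; first by exists a.
split; last by rewrite addrC subrK.
split => //; apply: sgB => //; by case: (hpi a).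
Qed.
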